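(* If $\gamma=-\phi$ (i.e. $\gamma[b]=-\phi[b]1_{\mathcal B}$ for all $b$), then for $u_1,\dots,u_n\in\mathcal B$, $B_n[X(u_1),\dots,X(u_n)]=\langle a^-(u_1)a^0(u_2)\cdots a^0(u_{n-1})a^+(u_n)\Omega,\Omega\rangle_{\gamma,\phi}$.
   Context: Let $\mathcal B$ be a unital $*$-algebra with star-linear maps $\phi:\mathcal B\to\mathbb C$, $\gamma:\mathcal B\to\mathcal B$, $\Lambda:\mathcal B\otimes_{alg}\mathcal B\to\mathcal B$, where $\phi$ is positive and faithful and $\gamma+\phi$ is completely positive, with $(\gamma+\phi)[b]:=\gamma[b]+\phi[b]1_{\mathcal B}$. Assume $\phi[v^*\Lambda(b\otimes u)]=\phi[\Lambda(b^*\otimes v)^*u]$ and $\gamma[v^*\Lambda(b\otimes u)]=\gamma[\Lambda(b^*\otimes v)^*u]$ for all $b,u,v$. On $\mathcal F_{alg}(\mathcal B)=\mathbb C\Omega\oplus\bigoplus_{n\ge1}\mathcal B^{\otimes n}$ use the form $\langle\Omega,\Omega\rangle_{\gamma,\phi}=1$, $\langle u_1\otimes\cdots\otimes u_n,v_1\otimes\cdots\otimes v_k\rangle_{\gamma,\phi}=\delta_{n=k}\phi[v_n^*(\gamma+\phi)[v_{n-1}^*\cdots(\gamma+\phi)[v_1^*u_1]\cdots u_{n-1}]u_n]$. For $b\in\mathcal B$: $a^+(b)\Omega=b$, $a^+(b)(u_1\otimes\cdots\otimes u_n)=b\otimes u_1\otimes\cdots\otimes u_n$; $a^-(b)\Omega=0$,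 $a^-(b)u_1=\phi[bu_1]\Omega$, $a^-(b)(u_1\otimes\cdots\otimes u_n)=(\gamma+\phi)[bu_1]u_2\otimes\cdots\otimes u_n$ ($n\ge2$); $a^0(b)\Omega=0$, $a^0(b)(u_1\otimes\cdots\otimes u_n)=\Lambda(b\otimes u_1)\otimes u_2\otimes\cdots\otimes u_n$; $X(b)=a^+(b)+a^-(b)+a^0(b)$. Boolean cumulants $B_k$ with respect to $\psi(A)=\langle A\Omega,\Omega\rangle_{\gamma,\phi}$ are defined by $\psi[Y_1\cdots Y_n]=\sum_{\pi\in\mathrm{Int}(n)}\prod_{V\in\pi}B_{|V|}[Y_{V(1)},\dots,Y_{V(|V|)}]$, $\mathrm{Int}(n)$ the interval partitions of $\{1,\dots,n\}$. *)

(* Defs.v *)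
From HB Require Import structures.
From mathcomp Require Import all_boot all_order all_algebra.
From mathcomp Require Import complex.
From mathcomp Require Import reals.
Set Implicit Arguments. Unset Strict Implicit. Unset Printing Implicit Defensive.
Import Order.TTheory GRing.Theory Num.Theory.
Local Open Scope ring_scope.

Section Fock.
Variables (R : realType).
Notation C := (R[i])%type.
Variables (B : algType C) (star : B -> B).

Definition is_involution : Prop :=
  [/\ forall x : B, star (star x) = x,
      forall x y : B, star (x + y) = star x + star y,
      forall (a : C) (x : B), star (a *: x) = a^* *: star x
    & forall x y : B, star (x * y) = star y * star x].

Definition pos_elt (x : B) : Prop :=
  exists s : seq B, x = \sum_(y <- s) star y * y.

Definition star_linear_functional (f : B -> C) : Prop :=
  (forall (a : C) (x y : B), f (a *: x + y) = a * f x + f y) /\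
  (forall x, f (star x) = (f x)^*).
Definition star_linear_map (g : B -> B) : Prop :=
  (forall (a : C) (x y : B), g (a *: x + y) = a *: g x + g y) /\
  (forall x, g (star x) = star (g x)).
(** Lambda : B (x)_alg B -> B is given by the bilinear map (b,u) |-> Lambda(b (x) u);
    the involution on B (x) B is (b (x) u)^* = b^* (x) u^*. *)
Definition star_bilinear_map (L : B -> B -> B) : Prop :=
  [/\ forall (a : C) (x y z : B), L (a *: x + y) z = a *: L x z + L y z,
      forall (a : C) (x y z : B), L z (a *: x + y) = a *: L z x + L z y
    & forall x y, L (star x) (star y) = star (L x y)].

Definition positive_functional (f : B -> C) : Prop :=
  forall b : B, 0 <= f (star b * b).
Definition faithful_functional (f : B -> C) : Prop :=
  forall b : B, f (star b * b) = 0 -> b = 0.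
Definition completely_positive (g : B -> B) : Prop :=
  forall (n : nat) (b c : 'I_n -> B),
    pos_elt (\sum_(i < n) \sum_(j < n) star (c i) * g (star (b i) * b j) * c j).

Variables (phi : B -> C) (gamma : B -> B) (Lam : B -> B -> B).

Definition gp (b : B) : B := gamma b + phi b *: 1.

(** ---------- algebraic full Fock space ----------
   A vector is a formal finite linear combination of simple tensors;
   the simple tensor u_1 (x) ... (x) u_n is the word [:: u_1; ...; u_n],
   and Omega is the empty word. *)
Definition fock := seq (C * seq B).
Definition fscale (a : C) (v : fock) : fock := [seq (a * p.1, p.2) | p <- v].
Definition lin_ext (f : seq B -> fock) (v : fock) : fock :=
  flatten [seq fscale p.1 (f p.2) | p <- v].
Definition Omega : fock := [:: (1, [::])].

Definition a_plus (b : B) : fock -> fock :=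
  lin_ext (fun w => [:: (1, b :: w)]).
Definition a_minus (b : B) : fock -> fock :=
  lin_ext (fun w => match w with
                    | [::] => [::]
                    | [:: u1] => [:: (phi (b * u1), [::])]
                    | u1 :: u2 :: w' => [:: (1, (gp (b * u1) * u2) :: w')]
                    end).
Definition a_zero (b : B) : fock -> fock :=
  lin_ext (fun w => match w with
                    | [::] => [::]
                    | u1 :: w' => [:: (1, Lam b u1 :: w')]
                    end).
Definition Xop (b : B) : fock -> fock :=
  fun v => a_plus b v ++ a_minus b v ++ a_zero b v.

(** the form on simple tensors:
   <u_1..u_n, v_1..v_k> = delta_{n=k} phi[v_n^* (g+p)[ ... (g+p)[v_1^* u_1] ... u_{n-1}] u_n] *)
Fixpoint ipaux (x : B) (u v : seq B) : C :=
  match u, v with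
  | [:: u1], [:: v1] => phi (star v1 * x * u1)
  | u1 :: u', v1 :: v' => ipaux (gp (star v1 * x * u1)) u' v'
  | _, _ => 0
  end.
Definition ipw (u v : seq B) : C :=
  match u, v with
  | [::], [::] => 1
  | _, _ => ipaux 1 u v
  end.
Definition inner (v w : fock) : C :=
  \sum_(p <- v) \sum_(q <- w) p.1 * (q.1)^* * ipw p.2 q.2.

Definition opprod (Ys : seq (fock -> fock)) : fock -> fock :=
  foldr (fun f g => f \o g) id Ys.
Definition psi (Ys : seq (fock -> fock)) : C := inner (opprod Ys Omega) Omega.

(** interval partitions of {1,...,n}, encoded by the list of their block sizes
   (a composition of n) *)
Definition interval_partition (n : nat) (c : seq nat) : bool :=
  all (fun k => 0 < k)%N c && (sumn c == n).
Fixpoint blocks {T} (c : seq nat) (s : seq T) : seq (seq T) :=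
  match c with
  | [::] => [::]
  | k :: c' => take k s :: blocks c' (drop k s)
  end.
(** all sequences of length <= len with entries in {0,...,n} (a finite superset
   of the block-size lists of interval partitions of {1,...,n}) *)
Fixpoint seqs_upto (n len : nat) : seq (seq nat) :=
  match len with
  | 0 => [:: [::]]
  | len'.+1 => [::] :: [seq x :: s | x <- iota 0 n.+1, s <- seqs_upto n len']
  end.
Definition boolean_cumulants (Bc : seq (fock -> fock) -> C) : Prop :=
  forall Ys : seq (fock -> fock), (0 < size Ys)%N ->
    psi Ys = \sum_(c <- undup (seqs_upto (size Ys) (size Ys)) | interval_partition (size Ys) c)
       \prod_(V <- blocks c Ys) Bc V.
End Fock.

(* Main.v *)
Require Import Defs.
From HB Require Import structures.
From mathcomp Require Import all_boot all_order all_algebra.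
From mathcomp Require Import complex.
From mathcomp Require Import reals.
From mathcomp Require Import zify.
Import Order.TTheory GRing.Theory Num.Theory.
Local Open Scope ring_scope.

Definition Sc (n : nat) : seq (seq nat) :=
  filter (interval_partition n) (undup (seqs_upto n n)).

Lemma mem_seqs_upto n len (c : seq nat) :
  (size c <= len)%N -> all (fun x => x <= n)%N c -> c \in seqs_upto n len.
Proof.
elim: len c => [|len IH] [|x c] //; try by rewrite /= inE.
move=> Hs /andP[Hx Ha].
change (x :: c \in [::] :: flatten [seq [seq x0 :: s | s <- seqs_upto n len] | x0 <- iota 0 n.+1]).
rewrite inE; apply/orP; right.
apply/flattenP; exists [seq x :: s | s <- seqs_upto n len].
  by apply: (map_f (fun x0 => [seq x0 :: s | s <- seqs_upto n len])); rewrite mem_iota add0n ltnS Hx.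
by apply: map_f; apply: IH.
Qed.

Lemma size_le_sumn (c : seq nat) : all (fun k => 0 < k)%N c -> (size c <= sumn c)%N.
Proof. elim: c => [|x c IH] //= /andP[Hx Hc]; have := IH Hc; lia. Qed.

Lemma mem_le_sumn (c : seq nat) p : p \in c -> (p <= sumn c)%N.
Proof.
elim: c => [|x c IH] //=; rewrite inE => /orP[/eqP ->| H]; first lia.
have := IH H; lia.
Qed.

Lemma mem_Sc n c : (c \in Sc n) = interval_partition n c.
Proof.
rewrite mem_filter mem_undup; case IP: interval_partition => //=.
move: IP; rewrite /interval_partition => /andP[Hp /eqP Hs].
apply: mem_seqs_upto; first by rewrite -Hs size_le_sumn.
by apply/allP => x Hx; rewrite -Hs mem_le_sumn.
Qed.

Lemma uniq_Sc n : uniq (Sc n).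
Proof. exact: filter_uniq (undup_uniq _). Qed.

Lemma uniq_flat (ks : seq nat) (t : nat -> seq (seq nat)) :
  uniq ks -> (forall k, uniq (t k)) ->
  uniq (flatten [seq [seq k :: c | c <- t k] | k <- ks]).
Proof.
move=> Hk Ht; elim: ks Hk => [|k ks IH] //= /andP[kn Hk].
rewrite cat_uniq IH // andbT map_inj_uniq ?Ht //; last by move=> a b [].
apply/hasPn => x /flattenP [s /mapP [k' k'in ->]] /mapP [c' _ ->].
apply/negP => /mapP [c _ [ek _]].
by move: kn; rewrite -ek k'in.
Qed.

Lemma Sc_rec n : (0 < n)%N ->
  perm_eq (Sc n) (flatten [seq [seq k :: c | c <- Sc (n - k)] | k <- iota 1 n]).
Proof.
move=> Hn; apply: uniq_perm; first exact: uniq_Sc.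
  by apply: uniq_flat; [apply: iota_uniq| move=> k; apply: uniq_Sc].
move=> c; rewrite mem_Sc; apply/idP/flattenP.
  case: c => [|x c]; rewrite /interval_partition /=.
    by move=> /eqP H; move: Hn; rewrite -H.
  move=> /andP[/andP[Hx Hc] /eqP Hs].
  exists [seq x :: c0 | c0 <- Sc (n - x)]; first by apply: map_f; rewrite mem_iota; lia.
  apply: map_f; rewrite mem_Sc /interval_partition Hc /=; apply/eqP; lia.
move=> [s /mapP [k kin ->]] /mapP [c' c'in ->].
move: c'in; rewrite mem_Sc mem_iota in kin *.
rewrite /interval_partition /= => /andP[Hc /eqP Hs]; rewrite Hc andbT.
apply/andP; split; [lia| apply/eqP; lia].
Qed.

Lemma sum_Sc_rec {T : nmodType} n (F : seq nat -> T) : (0 < n)%N ->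
  \sum_(c <- Sc n) F c = \sum_(k <- iota 1 n) \sum_(c <- Sc (n - k)) F (k :: c).
Proof.
move=> Hn; rewrite (perm_big _ (Sc_rec n Hn)) big_flatten big_map.
by apply: eq_bigr => k _; rewrite big_map.
Qed.

Lemma Sc0 : Sc 0 = [:: [::]].
Proof. by []. Qed.

Lemma blocks_map {T U : Type} (f : T -> U) (c : seq nat) (s : seq T) :
  blocks c (map f s) = map (map f) (blocks c s).
Proof. by elim: c s => [|k c IH] s //=; rewrite -map_take -map_drop IH. Qed.

Lemma blocks_size {T : eqType} (c : seq nat) (w : seq T) :
  all (fun k => 0 < k)%N c -> sumn c = size w ->
  forall V, V \in blocks c w -> size V \in c.
Proof.
elim: c w => [|k c IH] w //= /andP[kpos call] hs V; rewrite inE.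
move=> /orP[/eqP ->| HV].
  by rewrite size_takel ?inE ?eqxx //; lia.
rewrite inE; apply/orP; right; apply: (IH (drop k w)) => //.
rewrite size_drop; lia.
Qed.

Lemma part_lt p (c : seq nat) N : p \in c -> all (fun k => 0 < k)%N c ->
  sumn c = N -> c != [:: N] -> (0 < p < N)%N.
Proof.
case: c => [|x [|y c]] //.
  rewrite inE /= => /eqP -> /andP[Hx _] HN; rewrite -HN addn0 eqxx //.
rewrite inE => /orP[/eqP ->| Hp] /= /andP[Hx /andP[Hy Hc]] HN _; first lia.
have := mem_le_sumn (y :: c) p Hp.
have Hp0 : (0 < p)%N.
  by move: Hp; rewrite inE => /orP[/eqP ->//|]; move/(allP Hc).
move=> /= ?; lia.
Qed.

Definition Lf {R : realType} {B : algType R[i]} (g : seq B -> R[i]) (v : fock B) : R[i] :=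
  \sum_(p <- v) p.1 * g p.2.

Lemma Lf_cat {R : realType} {B : algType R[i]} (g : seq B -> R[i]) v1 v2 :
  Lf g (v1 ++ v2) = Lf g v1 + Lf g v2.
Proof. by rewrite /Lf big_cat. Qed.

Lemma Lf_fscale {R : realType} {B : algType R[i]} (g : seq B -> R[i]) a v :
  Lf g (fscale a v) = a * Lf g v.
Proof.
rewrite /Lf /fscale big_map mulr_sumr; apply: eq_bigr => p _ /=; by rewrite mulrA.
Qed.

Lemma Lf_lin_ext {R : realType} {B : algType R[i]} (g : seq B -> R[i]) F v :
  Lf g (lin_ext F v) = Lf (fun w => Lf g (F w)) v.
Proof.
rewrite /lin_ext {1}/Lf big_flatten big_map /Lf; apply: eq_bigr => p _.
exact: Lf_fscale.
Qed.

Lemma Lf_single {R : realType} {B : algType R[i]} (g : seq B -> R[i]) c w :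
  Lf g [:: (c, w)] = c * g w.
Proof. by rewrite /Lf big_cons big_nil addr0. Qed.

Lemma Lf_nil {R : realType} {B : algType R[i]} (g : seq B -> R[i]) :
  Lf g [::] = 0.
Proof. by rewrite /Lf big_nil. Qed.

Definition Tg {R : realType} {B : algType R[i]} (phi : B -> R[i]) (gamma : B -> B)
  (Lam : B -> B -> B) (u : B) (g : seq B -> R[i]) (w : seq B) : R[i] :=
  Lf g (a_plus u [:: (1, w)]) + Lf g (a_minus phi gamma u [:: (1, w)])
  + Lf g (a_zero Lam u [:: (1, w)]).

Lemma Lf_Xop {R : realType} {B : algType R[i]} (phi : B -> R[i]) (gamma : B -> B)
  (Lam : B -> B -> B) u g v :
  Lf g (Xop phi gamma Lam u v) = Lf (Tg phi gamma Lam u g) v.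
Proof.
rewrite /Xop !Lf_cat /a_plus /a_minus /a_zero !Lf_lin_ext /Lf -!big_split.
apply: eq_bigr => p _ /=; rewrite -!mulrDr addrA; f_equal.
rewrite /Tg /a_plus /a_minus /a_zero !Lf_lin_ext !Lf_single; rewrite !mul1r big_cons big_nil addr0 mul1r; reflexivity.
Qed.

Fixpoint Gfold {R : realType} {B : algType R[i]} (phi : B -> R[i]) (gamma : B -> B)
  (Lam : B -> B -> B) (g : seq B -> R[i]) (w : seq B) : seq B -> R[i] :=
  match w with
  | [::] => g
  | u :: w' => Gfold phi gamma Lam (Tg phi gamma Lam u g) w'
  end.

Lemma Lf_opprod {R : realType} {B : algType R[i]} (phi : B -> R[i]) (gamma : B -> B)
  (Lam : B -> B -> B) w g v :
  Lf g (opprod (map (Xop phi gamma Lam) w) v) = Lf (Gfold phi gamma Lam g w) v.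
Proof.
elim: w g => [|u w IH] g //=.
by rewrite Lf_Xop -IH.
Qed.

Definition g0 {R : realType} {B : algType R[i]} (w : seq B) : R[i] :=
  if w is [::] then 1 else 0.

Lemma inner_Omega {R : realType} {B : algType R[i]} (star : B -> B) (phi : B -> R[i])
  (gamma : B -> B) v :
  inner star phi gamma v (Omega B) = Lf g0 v.
Proof.
rewrite /inner /Lf; apply: eq_bigr => p _.
rewrite big_cons big_nil addr0 /= conjC1 mulr1; congr (_ * _).
by case: p.2 => [|x [|y t]].
Qed.

Lemma Lf_Omega {R : realType} {B : algType R[i]} (g : seq B -> R[i]) :
  Lf g (Omega B) = g [::].
Proof. by rewrite /Omega Lf_single mul1r. Qed.

Definition nice {R : realType} {B : algType R[i]} (g : seq B -> R[i]) :=
  (forall x y w, g (x :: y :: w) = 0) /\ g [:: 0] = 0.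

Lemma T_nil {R : realType} {B : algType R[i]} (phi : B -> R[i]) (gamma : B -> B)
  (Lam : B -> B -> B) u g :
  Tg phi gamma Lam u g [::] = g [:: u].
Proof.
by rewrite /Tg /a_plus /a_minus /a_zero !Lf_lin_ext !Lf_single /= !Lf_nil !mul1r !addr0.
Qed.

Lemma T_one {R : realType} {B : algType R[i]} (phi : B -> R[i]) (gamma : B -> B)
  (Lam : B -> B -> B) u g x : nice g ->
  Tg phi gamma Lam u g [:: x] = phi (u * x) * g [::] + g [:: Lam u x].
Proof.
move=> [H1 H2].
by rewrite /Tg /a_plus /a_minus /a_zero !Lf_lin_ext !Lf_single !mul1r /= H1 add0r.
Qed.

Lemma nice_T {R : realType} {B : algType R[i]} (phi : B -> R[i]) (gamma : B -> B)
  (Lam : B -> B -> B) u g :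
  (forall b, gp phi gamma b = 0) -> phi 0 = 0 -> (forall b, Lam b 0 = 0) ->
  nice g -> nice (Tg phi gamma Lam u g).
Proof.
move=> Hgp Hphi HL [H1 H2]; split.
  move=> x y w.
  rewrite /Tg /a_plus /a_minus /a_zero !Lf_lin_ext !Lf_single !mul1r /=.
  rewrite !H1 Hgp mul0r; case: w => [|z w]; by rewrite ?H2 ?H1 !addr0.
rewrite T_one // mulr0 Hphi mul0r add0r HL //.
Qed.

Fixpoint Mfun {R : realType} {B : algType R[i]} (phi : B -> R[i]) (Lam : B -> B -> B)
  (a : R[i]) (f : B -> R[i]) (w : seq B) : R[i] :=
  match w with
  | [::] => a
  | u :: w' => Mfun phi Lam (f u) (fun x => phi (u * x) * a + f (Lam u x)) w'
  end.

Lemma Gfold_Mfun {R : realType} {B : algType R[i]} (phi : B -> R[i]) (gamma : B -> B)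
  (Lam : B -> B -> B) :
  (forall b, gp phi gamma b = 0) -> phi 0 = 0 -> (forall b, Lam b 0 = 0) ->
  forall w g a f, nice g -> g [::] = a -> (forall x, g [:: x] = f x) ->
  Gfold phi gamma Lam g w [::] = Mfun phi Lam a f w.
Proof.
move=> Hgp Hphi HL; elim=> [|u w IH] g a f Hn Ha Hf //=.
apply: IH; first exact: nice_T.
  by rewrite T_nil Hf.
by move=> x; rewrite T_one // Ha Hf.
Qed.

Fixpoint LL {R : realType} {B : algType R[i]} (Lam : B -> B -> B) (p : seq B) : B :=
  match p with
  | [::] => 0
  | u :: p' => match p' with [::] => u | _ => Lam u (LL Lam p') end
  end.

Definition Kc {R : realType} {B : algType R[i]} (phi : B -> R[i]) (Lam : B -> B -> B)
  (w : seq B) : R[i] :=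
  match w with
  | u :: p => match p with [::] => 0 | _ => phi (u * LL Lam p) end
  | [::] => 0
  end.

Definition Mom {R : realType} {B : algType R[i]} (phi : B -> R[i]) (Lam : B -> B -> B)
  (w : seq B) : R[i] :=
  \sum_(c <- Sc (size w)) \prod_(V <- blocks c w) Kc phi Lam V.

Lemma Mom_nil {R : realType} {B : algType R[i]} (phi : B -> R[i]) (Lam : B -> B -> B) :
  Mom phi Lam [::] = 1.
Proof. by rewrite /Mom /= Sc0 big_cons big_nil big_nil addr0. Qed.

Lemma Mom_rec {R : realType} {B : algType R[i]} (phi : B -> R[i]) (Lam : B -> B -> B)
  (w : seq B) : (0 < size w)%N ->
  Mom phi Lam w = \sum_(k <- iota 1 (size w)) Kc phi Lam (take k w) * Mom phi Lam (drop k w).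
Proof.
move=> Hw; rewrite /Mom sum_Sc_rec //; apply: eq_bigr => k _.
rewrite size_drop mulr_sumr; apply: eq_bigr => c _.
by rewrite /= big_cons.
Qed.

Lemma sum_iota2 {T : nmodType} n (F : nat -> T) :
  \sum_(k <- iota 2 n) F k = \sum_(k <- iota 1 n) F k.+1.
Proof. by rewrite -[2%N]/(1 + 1)%N iotaDl big_map. Qed.

Lemma Mfun_closed {R : realType} {B : algType R[i]} (phi : B -> R[i]) (Lam : B -> B -> B) :
  forall w a f, Mfun phi Lam a f w = a * Mom phi Lam w +
    \sum_(k <- iota 1 (size w)) f (LL Lam (take k w)) * Mom phi Lam (drop k w).
Proof.
elim=> [|u w IH] a f.
  by rewrite /= Mom_nil mulr1 big_nil addr0.
rewrite /= IH (Mom_rec _ _ (u :: w)) //= !big_cons !sum_iota2 /= take0 drop0 mul0r add0r; clear IH.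
have E1 : \sum_(j <- iota 1 (size w)) Kc phi Lam (u :: take j w) * Mom phi Lam (drop j w)
   = \sum_(j <- iota 1 (size w)) phi (u * LL Lam (take j w)) * Mom phi Lam (drop j w).
  rewrite big_seq [RHS]big_seq; apply: eq_bigr => k; rewrite mem_iota => Hk.
  by case: w Hk => [|x t] /=; [lia| case: k => [|k] //=; lia].
have E2 : \sum_(j <- iota 1 (size w)) f (LL Lam (u :: take j w)) * Mom phi Lam (drop j w)
   = \sum_(j <- iota 1 (size w)) f (Lam u (LL Lam (take j w))) * Mom phi Lam (drop j w).
  rewrite big_seq [RHS]big_seq; apply: eq_bigr => k; rewrite mem_iota => Hk.
  by clear E1; case: w Hk => [|x t] /=; [lia| case: k => [|k] //=; lia].
rewrite E1 E2 mulr_sumr.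
under eq_bigr do rewrite mulrDl.
rewrite big_split /= addrA [RHS]addrCA [RHS]addrA; congr (_ + _ + _).
by apply: eq_bigr => k _; rewrite mulrA [phi _ * a]mulrC.
Qed.

Lemma psi_X {R : realType} {B : algType R[i]} (star : B -> B) (phi : B -> R[i])
  (gamma : B -> B) (Lam : B -> B -> B) :
  (forall b, gp phi gamma b = 0) -> phi 0 = 0 -> (forall b, Lam b 0 = 0) ->
  forall w, psi star phi gamma (map (Xop phi gamma Lam) w) = Mom phi Lam w.
Proof.
move=> Hgp Hphi HL w.
rewrite /psi inner_Omega Lf_opprod Lf_Omega.
rewrite (Gfold_Mfun phi gamma Lam Hgp Hphi HL w g0 1 (fun _ => 0)) //.
  by rewrite Mfun_closed mul1r big1 ?addr0 // => k _; rewrite mul0r.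
Qed.

Lemma cumulants_X {R : realType} {B : algType R[i]} (star : B -> B) (phi : B -> R[i])
  (gamma : B -> B) (Lam : B -> B -> B) (Bc : seq (fock B -> fock B) -> R[i]) :
  (forall b, gp phi gamma b = 0) -> phi 0 = 0 -> (forall b, Lam b 0 = 0) ->
  boolean_cumulants star phi gamma Bc ->
  forall n w, (0 < size w <= n)%N -> Bc (map (Xop phi gamma Lam) w) = Kc phi Lam w.
Proof.
move=> Hgp Hphi HL Hbc; elim=> [|n IH] w Hw; first lia.
have Hw0 : (0 < size (map (Xop phi gamma Lam) w))%N by rewrite size_map; lia.
have := Hbc _ Hw0; rewrite psi_X // size_map -big_filter -/(Sc (size w)).
have Hin : [:: size w] \in Sc (size w).
  by rewrite mem_Sc /interval_partition /= addn0 eqxx andbT; lia.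
rewrite /Mom (bigD1_seq _ Hin (uniq_Sc _)) (bigD1_seq _ Hin (uniq_Sc _)) /=.
rewrite !big_cons !big_nil !mulr1 take_size.
rewrite take_oversize ?size_map //.
set S2 := (X in _ + X = _); set S1 := (X in _ = _ + X).
have -> : S1 = S2.
  rewrite /S1 /S2 big_seq_cond [RHS]big_seq_cond; apply: eq_bigr => c /andP[Hc Hne].
  rewrite blocks_map big_map big_seq [RHS]big_seq; apply: eq_bigr => V HV.
  move: Hc; rewrite mem_Sc /interval_partition => /andP[Hp /eqP Hs].
  have HVc := blocks_size _ _ Hp Hs _ HV.
  have := part_lt _ _ _ HVc Hp Hs Hne => Hlt.
  apply: IH; move: Hw Hlt => /andP[_ H1] /andP[H2 H3]; apply/andP; split; first exact: H2.
  by rewrite -ltnS (leq_trans H3 H1).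
by move/addIr ->.
Qed.

Lemma opprod_rcons {R : realType} {B : algType R[i]} (l : seq (fock B -> fock B)) f v :
  opprod (rcons l f) v = opprod l (f v).
Proof. by elim: l => [|g l IH] //=; rewrite IH. Qed.

Lemma a_zero_chain {R : realType} {B : algType R[i]} (Lam : B -> B -> B) (us : seq B) :
  forall (c : R[i]) (x : B),
  opprod (map (a_zero Lam) us) [:: (c, [:: x])] = [:: (c, [:: foldr Lam x us])].
Proof.
elim: us => [|u us IH] c x //=.
by rewrite IH /a_zero /lin_ext /= mulr1.
Qed.

Lemma LL_rcons {R : realType} {B : algType R[i]} (Lam : B -> B -> B) (us : seq B) un :
  LL Lam (rcons us un) = foldr Lam un us.
Proof.
elim: us => [|u us IH] //=.
by rewrite -IH; case: us {IH} => [|v us].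
Qed.

Theorem corollary3p5 (R : realType) (B : algType R[i]) (star : B -> B)
  (phi : B -> R[i]) (gamma : B -> B) (Lam : B -> B -> B) :
  is_involution star ->
  star_linear_functional star phi ->
  star_linear_map star gamma ->
  star_bilinear_map star Lam ->
  positive_functional star phi ->
  faithful_functional star phi ->
  completely_positive star (gp phi gamma) ->
  (forall b u v : B, phi (star v * Lam b u) = phi (star (Lam (star b) v) * u)) ->
  (forall b u v : B, gamma (star v * Lam b u) = gamma (star (Lam (star b) v) * u)) ->
  (* gamma = - phi *)
  (forall b : B, gamma b = - (phi b *: 1)) ->
  forall Bc : seq (fock B -> fock B) -> R[i],
  boolean_cumulants star phi gamma Bc ->
  forall (u1 un : B) (us : seq B),
    Bc (map (Xop phi gamma Lam) (u1 :: rcons us un)) =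
    inner star phi gamma
      (opprod (a_minus phi gamma u1 :: rcons (map (a_zero Lam) us) (a_plus un))
        (Omega B))
      (Omega B).
Proof.
move=> _ [Hlin _] _ [_ Hbil _] _ _ _ _ _ Hg Bc Hbc u1 un us.
have Hgp : forall b, gp phi gamma b = 0 by move=> b; rewrite /gp Hg addNr.
have Hphi : phi 0 = 0.
  have := Hlin 1 0 0; rewrite scale1r addr0 mul1r => H.
  by apply: (addrI (phi 0)); rewrite addr0 -H.
have HL : forall b, Lam b 0 = 0.
  move=> b; have := Hbil 1 0 0 b; rewrite !scale1r addr0 => H.
  by apply: (addrI (Lam b 0)); rewrite addr0 -H.
rewrite (cumulants_X star phi gamma Lam Bc Hgp Hphi HL Hbc (size (u1 :: rcons us un))); last first.
  by rewrite /= ltnSn.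
rewrite inner_Omega /= opprod_rcons.
rewrite /a_plus /Omega /lin_ext /= mulr1 a_zero_chain /a_minus /lin_ext /=.
rewrite Lf_single /= mulr1 !mul1r.
by rewrite LL_rcons; case: us => [|v us].
Qed.
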